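(* Let $X$ be a compact smooth $n$-dimensional manifold and $P$ an $h$-differential operator on $X$ of the form $\sum_{|\alpha|\le m}a_\alpha(x;h)(hD_x)^\alpha$ in local coordinates, with coefficients uniformly bounded in $C^\infty$, $a_\alpha=a_\alpha^0+\mathcal{O}(h)$ in $C^\infty$, $a_\alpha$ independent of $h$ for $|\alpha|=m$, and classically elliptic: $|\sum_{|\alpha|=m}a_\alpha(x)\xi^\alpha|\ge\frac1C|\xi|^m$. Let $p(x,\xi)=\sum_{|\alpha|\le m}a^0_\alpha(x)\xi^\alpha$, fix $z\in\mathbb{C}$, let $s=|p-z|^2$, and for $0<\alpha\ll 1$ let $\Lambda=\left(\frac{\alpha+s}{1+s}\right)^{1/2}$. Then for every choice of local coordinates $x$ on $X$, with $(x,\xi)$ the corresponding canonical coordinates on $T^*X$, for all $\ell\in\mathbb{R}$ and $\widetilde\alpha,\beta\in\mathbb{N}^n$ we have, uniformly in $\xi$ and in $\alpha$ and locally uniformly in $x$, $$\partial_x^{\widetilde\alpha}\partial_\xi^\beta\Big(1+\frac s\alpha\Big)^\ell=\mathcal{O}(1)\Big(1+\frac s\alpha\Big)^\ell\Lambda^{-|\widetilde\alpha|-|\beta|}\langle\xi\rangle^{-|\beta|}.$$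
   Context: $\langle\xi\rangle=(1+|\xi|^2)^{1/2}$. Note $\sqrt\alpha\le\Lambda\le1$. *)

(* Defs.v *)
From HB Require Import structures.
From mathcomp Require Import all_boot all_order all_algebra.
From mathcomp Require Import all_classical all_reals all_analysis.
Set Implicit Arguments. Unset Strict Implicit. Unset Printing Implicit Defensive.
Import Order.TTheory GRing.Theory Num.Theory.
Import numFieldNormedType.Exports.
Local Open Scope ring_scope.
Local Open Scope classical_set_scope.

Section Defs.
Variables (R : realType) (n : nat).

Definition evec (i : 'I_n) : 'rV[R]_n := delta_mx 0 i.

Definition dpart (i : 'I_n) (f : 'rV[R]_n -> R) : 'rV[R]_n -> R :=
  fun x => derive f x (evec i).

Definition iter_partial (ds : seq 'I_n) (f : 'rV[R]_n -> R) := foldr dpart f ds.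

Definition smooth_on (U : set 'rV[R]_n) (f : 'rV[R]_n -> R) : Prop :=
  forall (ds : seq 'I_n) (x : 'rV[R]_n), U x ->
    (forall i, derivable (iter_partial ds f) x (evec i)) /\
    {for x, continuous (iter_partial ds f)}.

Definition dx (i : 'I_n) (G : 'rV[R]_n -> 'rV[R]_n -> R) : 'rV[R]_n -> 'rV[R]_n -> R :=
  fun x xi => derive (fun y => G y xi) x (evec i).
Definition dxi (i : 'I_n) (G : 'rV[R]_n -> 'rV[R]_n -> R) : 'rV[R]_n -> 'rV[R]_n -> R :=
  fun x xi => derive (G x) xi (evec i).

Definition dX (a : 'I_n -> nat) G :=
  foldr (fun i H => iter (a i) (dx i) H) G (enum 'I_n).
Definition dXi (b : 'I_n -> nat) G :=
  foldr (fun i H => iter (b i) (dxi i) H) G (enum 'I_n).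

Definition mlen (a : 'I_n -> nat) : nat := (\sum_i a i)%N.

Definition mdeg (m : nat) (a : {ffun 'I_n -> 'I_m.+1}) : nat := (\sum_i (a i : nat))%N.
Definition monom (m : nat) (xi : 'rV[R]_n) (a : {ffun 'I_n -> 'I_m.+1}) : R :=
  \prod_i xi 0 i ^+ a i.

Definition symb (m : nat) (c : {ffun 'I_n -> 'I_m.+1} -> 'rV[R]_n -> R) x xi : R :=
  \sum_(a | (mdeg a <= m)%N) c a x * monom xi a.
Definition princ (m : nat) (c : {ffun 'I_n -> 'I_m.+1} -> 'rV[R]_n -> R) x xi : R :=
  \sum_(a | mdeg a == m) c a x * monom xi a.

Definition enorm (xi : 'rV[R]_n) : R := Num.sqrt (\sum_i xi 0 i ^+ 2).
Definition japan (xi : 'rV[R]_n) : R := Num.sqrt (1 + enorm xi ^+ 2).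

(* p = p_re + i p_im ; s = |p - z|^2 with z = zr + i zi *)
Definition sq_dist (m : nat) (ar ai : {ffun 'I_n -> 'I_m.+1} -> 'rV[R]_n -> R) (zr zi : R)
  x xi : R := (symb ar x xi - zr) ^+ 2 + (symb ai x xi - zi) ^+ 2.

Definition Lam (m : nat) (ar ai : {ffun 'I_n -> 'I_m.+1} -> 'rV[R]_n -> R) (zr zi alpha : R)
  x xi : R := Num.sqrt ((alpha + sq_dist ar ai zr zi x xi) / (1 + sq_dist ar ai zr zi x xi)).

End Defs.

(* Main.v *)
Require Import Defs.
From HB Require Import structures.
From mathcomp Require Import all_boot all_order all_algebra.
From mathcomp Require Import all_classical all_reals all_analysis.
From mathcomp Require Import ring lra.
Import Order.TTheory GRing.Theory Num.Theory.
Import numFieldNormedType.Exports.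
Local Open Scope ring_scope.
Local Open Scope classical_set_scope.
Set Implicit Arguments. Unset Strict Implicit.

Section Basic.
Variables (R : realType).

Lemma deriveE1 (V : normedModType R) (f : V -> R) x v :
  derive f x v = derive (fun h : R => f (h *: v + x)) 0 1.
Proof.
rewrite /derive; set g1 := fun h => h^-1 *: _; set g2 := fun h => h^-1 *: _.
suff -> : g1 = g2 by [].
by rewrite funeqE /g1 /g2 => h /=; rewrite addr0 scale0r add0r [_%:A]mulr1.
Qed.

Lemma chain_rule (V : normedModType R) (f : V -> R) (g : R -> R) x v dg :
  derivable f x v -> is_derive (f x) 1 g dg ->
  derivable (g \o f) x v /\ derive (g \o f) x v = dg * derive f x v.
Proof.
move=> df [dgv dgval].
have F0 : (fun h : R => f (h *: v + x)) 0 = f x by rewrite /= scale0r add0r.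
have df1 := (derivable1P f x v).1 df.
have dg1 : derivable g ((fun h : R => f (h *: v + x)) 0) 1 by rewrite F0.
split.
  apply/derivable1P; apply/derivable1_diffP.
  apply: (@differentiable_comp _ _ _ _ (fun h : R => f (h *: v + x)) g).
    exact/derivable1_diffP.
  exact/derivable1_diffP.
rewrite (deriveE1 (g \o f)) (deriveE1 f).
have := derive1_comp df1 dg1; rewrite /= !derive1E F0 dgval => <-.
by [].
Qed.

End Basic.

Section Ops.
Variables (R : realType) (n : nat) (U : set 'rV[R]_n).
Hypothesis oU : open U.
Local Notation V := 'rV[R]_n.

Definition op (o : bool * 'I_n) (H : V -> V -> R) : V -> V -> R :=
  if o.1 then dx o.2 H else dxi o.2 H.
Definition dvb (o : bool * 'I_n) (H : V -> V -> R) x xi : Prop :=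
  if o.1 then derivable (fun y => H y xi) x (evec R o.2)
  else derivable (H x) xi (evec R o.2).
Definition aops (ds : seq (bool * 'I_n)) H := foldr op H ds.
Definition eqU (H1 H2 : V -> V -> R) := forall x xi, U x -> H1 x xi = H2 x xi.

Definition fadd (F G : V -> V -> R) : V -> V -> R := fun x xi => F x xi + G x xi.
Definition fmul (F G : V -> V -> R) : V -> V -> R := fun x xi => F x xi * G x xi.
Definition fscal (c : R) (F : V -> V -> R) : V -> V -> R := fun x xi => c * F x xi.
Definition fcst (c : R) : V -> V -> R := fun _ _ => c.

Lemma nbhsU x : U x -> nbhs x U.
Proof. by move=> Ux; apply: open_nbhs_nbhs; split. Qed.

Lemma eqU_sym H1 H2 : eqU H1 H2 -> eqU H2 H1.
Proof. by move=> e x xi Ux; rewrite e. Qed.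

Lemma eqU_trans H1 H2 H3 : eqU H1 H2 -> eqU H2 H3 -> eqU H1 H3.
Proof. by move=> e1 e2 x xi Ux; rewrite e1 // e2. Qed.

Lemma eqU_op o H1 H2 : eqU H1 H2 -> eqU (op o H1) (op o H2).
Proof.
move=> e x xi Ux; case: o => [[] i]; rewrite /op /=.
  rewrite /dx; apply: near_eq_derive.
  by near=> y; apply: e; near: y; exact: nbhsU.
rewrite /dxi; congr (derive _ _ _); apply/funext => eta; exact: e.
Unshelve. all: by end_near. Qed.

Lemma eqU_aops ds H1 H2 : eqU H1 H2 -> eqU (aops ds H1) (aops ds H2).
Proof. by move=> e; elim: ds => [|o ds IH] //=; apply: eqU_op. Qed.

Lemma eqU_dvb o H1 H2 x xi : eqU H1 H2 -> U x -> dvb o H1 x xi -> dvb o H2 x xi.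
Proof.
move=> e Ux; case: o => [[] i]; rewrite /dvb /=.
  apply: near_eq_derivable.
  by near=> y; apply: e; near: y; exact: nbhsU.
suff -> : H2 x = H1 x by [].
by apply/funext => eta; rewrite e.
Unshelve. all: by end_near. Qed.

Lemma op_add o F G x xi : dvb o F x xi -> dvb o G x xi ->
  dvb o (fadd F G) x xi /\ op o (fadd F G) x xi = op o F x xi + op o G x xi.
Proof.
case: o => [[] i]; rewrite /dvb /op /dx /dxi /fadd /= => dF dG.
  by split; [exact: derivableD dF dG | exact: deriveD dF dG].
by split; [exact: derivableD dF dG | exact: deriveD dF dG].
Qed.

Lemma op_mul o F G x xi : dvb o F x xi -> dvb o G x xi ->
  dvb o (fmul F G) x xi /\
  op o (fmul F G) x xi = op o F x xi * G x xi + F x xi * op o G x xi.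
Proof.
case: o => [[] i]; rewrite /dvb /op /dx /dxi /fmul /= => dF dG.
  split; first exact: derivableM dF dG.
  have := deriveM dF dG => /= ->.
  by rewrite addrC mulrC.
split; first exact: derivableM dF dG.
have := deriveM dF dG => /= ->.
by rewrite addrC mulrC.
Qed.

Lemma op_scal o c F x xi : dvb o F x xi ->
  dvb o (fscal c F) x xi /\ op o (fscal c F) x xi = c * op o F x xi.
Proof.
case: o => [[] i]; rewrite /dvb /op /dx /dxi /fscal /= => dF.
  by split; [exact: (derivableM (derivable_cst c _ _) dF) | exact: (@deriveMl _ _ _ c _ _ dF)].
by split; [exact: (derivableM (derivable_cst c _ _) dF) | exact: (@deriveMl _ _ _ c _ _ dF)].
Qed.

Lemma op_cst o c : op o (fcst c) = fcst 0.
Proof.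
apply/funext => x; apply/funext => xi.
case: o => [[] i]; rewrite /op /dx /dxi /fcst /=; exact: derive_cst.
Qed.

Lemma dvb_cst o c x xi : dvb o (fcst c) x xi.
Proof. case: o => [[] i]; rewrite /dvb /fcst /=; exact: derivable_cst. Qed.

Lemma aops_rcons ds o H : aops (rcons ds o) H = aops ds (op o H).
Proof. by rewrite /aops foldr_rcons. Qed.

Definition GoodN N H := forall ds, (size ds <= N)%N ->
  forall o x xi, U x -> dvb o (aops ds H) x xi.

Lemma GoodN_le N M H : (N <= M)%N -> GoodN M H -> GoodN N H.
Proof. by move=> NM G ds sds; apply: G; apply: leq_trans NM. Qed.

Lemma GoodN_op N o H : GoodN N.+1 H -> GoodN N (op o H).
Proof. by move=> G ds sds o' x xi Ux; rewrite -aops_rcons; apply: G => //; rewrite size_rcons. Qed.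

Lemma GoodN_add N F G : GoodN N F -> GoodN N G ->
  (forall ds, (size ds <= N.+1)%N ->
     eqU (aops ds (fadd F G)) (fadd (aops ds F) (aops ds G))) /\
  GoodN N (fadd F G).
Proof.
move=> GF GG.
have E : forall ds, (size ds <= N.+1)%N ->
     eqU (aops ds (fadd F G)) (fadd (aops ds F) (aops ds G)).
  elim=> [|o ds IH] /= sds; first by [].
  apply: eqU_trans; first exact/eqU_op/IH/ltnW.
  move=> x xi Ux; exact: (op_add (GF _ sds _ _ _ Ux) (GG _ sds _ _ _ Ux)).2.
split=> // ds sds o x xi Ux.
apply: (eqU_dvb (eqU_sym (E ds (leqW sds)))) => //.
exact: (op_add (GF _ sds _ _ _ Ux) (GG _ sds _ _ _ Ux)).1.
Qed.

Lemma GoodN_scal N c F : GoodN N F ->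
  (forall ds, (size ds <= N.+1)%N ->
     eqU (aops ds (fscal c F)) (fscal c (aops ds F))) /\
  GoodN N (fscal c F).
Proof.
move=> GF.
have E : forall ds, (size ds <= N.+1)%N ->
     eqU (aops ds (fscal c F)) (fscal c (aops ds F)).
  elim=> [|o ds IH] /= sds; first by [].
  apply: eqU_trans; first exact/eqU_op/IH/ltnW.
  move=> x xi Ux; exact: (op_scal c (GF _ sds _ _ _ Ux)).2.
split=> // ds sds o x xi Ux.
apply: (eqU_dvb (eqU_sym (E ds (leqW sds)))) => //.
exact: (op_scal c (GF _ sds _ _ _ Ux)).1.
Qed.

Lemma op_mul_eqU o F G : GoodN 0 F -> GoodN 0 G ->
  eqU (op o (fmul F G)) (fadd (fmul (op o F) G) (fmul F (op o G))).
Proof.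
move=> GF GG x xi Ux.
exact: (op_mul (GF [::] isT o _ _ Ux) (GG [::] isT o _ _ Ux)).2.
Qed.

Lemma GoodN_mul N F G : GoodN N F -> GoodN N G -> GoodN N (fmul F G).
Proof.
elim: N F G => [|N IH] F G GF GG ds.
  case: ds => // _ o x xi Ux /=.
  exact: (op_mul (GF [::] isT o _ _ Ux) (GG [::] isT o _ _ Ux)).1.
case/lastP: ds => [|ds o'] sds o x xi Ux.
  exact: (op_mul (GF [::] isT o _ _ Ux) (GG [::] isT o _ _ Ux)).1.
rewrite size_rcons ltnS in sds.
rewrite aops_rcons.
have G0F : GoodN 0 F := GoodN_le (isT : (0 <= N.+1)%N) GF.
have G0G : GoodN 0 G := GoodN_le (isT : (0 <= N.+1)%N) GG.
apply: (eqU_dvb (eqU_sym (eqU_aops ds (op_mul_eqU o' G0F G0G)))) => //.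
have H1 : GoodN N (fmul (op o' F) G).
  by apply: IH; [exact: GoodN_op | exact: GoodN_le (leqnSn N) GG].
have H2 : GoodN N (fmul F (op o' G)).
  by apply: IH; [exact: GoodN_le (leqnSn N) GF | exact: GoodN_op].
exact: (GoodN_add H1 H2).2.
Qed.

Lemma GoodN_cst N c : GoodN N (fcst c).
Proof.
move=> ds _ o x xi _.
suff -> : aops ds (fcst c) = fcst (if ds is [::] then c else 0) by exact: dvb_cst.
elim: ds => [|o' ds IH] //=; rewrite IH; exact: op_cst.
Qed.

End Ops.

Section Bounds.
Variables (R : realType) (n : nat) (U : set 'rV[R]_n).
Hypothesis oU : open U.
Local Notation V := 'rV[R]_n.
Variables (K : set V) (fac : bool * 'I_n -> R -> V -> V -> R).
Hypothesis KU : K `<=` U.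
Hypothesis fac0 : forall o a x xi, 0 <= fac o a x xi.

Definition mu ds a x xi := \prod_(o <- ds) fac o a x xi.

Lemma mu_rcons ds o a x xi : mu (rcons ds o) a x xi = mu ds a x xi * fac o a x xi.
Proof. by rewrite /mu big_rcons. Qed.

Lemma mu_ge0 ds a x xi : 0 <= mu ds a x xi.
Proof. by rewrite /mu; apply: prodr_ge0 => o _; exact: fac0. Qed.

Definition BdN N (F w : R -> V -> V -> R) := forall ds, (size ds <= N)%N ->
  exists2 C : R, 0 <= C & forall a x xi, 0 < a -> a <= 1 -> K x ->
    `|aops ds (F a) x xi| <= C * w a x xi * mu ds a x xi.

Definition GF N (F : R -> V -> V -> R) := forall a, 0 < a -> GoodN U N (F a).

Definition Fadd (F G : R -> V -> V -> R) := fun a => fadd (F a) (G a).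
Definition Fmul (F G : R -> V -> V -> R) := fun a => fmul (F a) (G a).
Definition Wmul (F G : R -> V -> V -> R) := fun a x xi => F a x xi * G a x xi.
Definition Fop o (F : R -> V -> V -> R) := fun a => op o (F a).

Lemma BdN_le N M F w : (N <= M)%N -> BdN M F w -> BdN N F w.
Proof. by move=> NM B ds sds; apply: B; apply: leq_trans NM. Qed.

Lemma GF_le N M F : (N <= M)%N -> GF M F -> GF N F.
Proof. by move=> NM G a a0; apply: GoodN_le NM (G a a0). Qed.

Lemma GF_op N o F : GF N.+1 F -> GF N (Fop o F).
Proof. by move=> G a a0; exact: GoodN_op (G a a0). Qed.

Lemma BdN_op N o F w : BdN N.+1 F w ->
  BdN N (Fop o F) (fun a x xi => w a x xi * fac o a x xi).
Proof.
move=> B ds sds; have [|C C0 HC] := B (rcons ds o); first by rewrite size_rcons.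
exists C => // a x xi a0 a1 Kx; have := HC a x xi a0 a1 Kx.
rewrite aops_rcons mu_rcons /Fop.
by have -> : C * (w a x xi * fac o a x xi) * mu ds a x xi = C * w a x xi * (mu ds a x xi * fac o a x xi) by ring.
Qed.

Lemma BdN_w N F w w' (c : R) : 0 <= c ->
  (forall a x xi, 0 < a -> a <= 1 -> K x -> w a x xi <= c * w' a x xi) ->
  BdN N F w -> BdN N F w'.
Proof.
move=> c0 ww B ds sds; have [C C0 HC] := B ds sds.
exists (C * c); first exact: mulr_ge0.
move=> a x xi a0 a1 Kx; apply: le_trans (HC a x xi a0 a1 Kx) _.
rewrite -!mulrA ler_wpM2l //.
have -> : c * (w' a x xi * mu ds a x xi) = (c * w' a x xi) * mu ds a x xi by ring.
by apply: ler_wpM2r; [exact: mu_ge0 | exact: ww].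
Qed.

Lemma BdN_add N F G w : GF N F -> GF N G -> BdN N F w -> BdN N G w ->
  BdN N (Fadd F G) w.
Proof.
move=> GFF GFG BF BG ds sds.
have [C1 C10 H1] := BF ds sds; have [C2 C20 H2] := BG ds sds.
exists (C1 + C2); first exact: addr_ge0.
move=> a x xi a0 a1 Kx; have Ux := KU Kx.
rewrite /Fadd ((GoodN_add oU (GFF a a0) (GFG a a0)).1 ds (leqW sds) x xi Ux) /fadd.
apply: le_trans (ler_normD _ _) _.
rewrite !mulrDl; apply: lerD; [exact: H1 | exact: H2].
Qed.

Lemma BdN_scal N (c : R -> R) F w : GF N F -> BdN N F w ->
  BdN N (fun a => fscal (c a) (F a)) (fun a x xi => `|c a| * w a x xi).
Proof.
move=> GFF BF ds sds; have [C C0 H] := BF ds sds.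
exists C => // a x xi a0 a1 Kx; have Ux := KU Kx.
rewrite ((GoodN_scal oU (c a) (GFF a a0)).1 ds (leqW sds) x xi Ux) /fscal normrM.
rewrite mulrA [C * _]mulrC -!mulrA ler_wpM2l // mulrA; exact: H.
Qed.

Lemma BdN_mul0 F G w1 w2 : BdN 0 F w1 -> BdN 0 G w2 ->
  exists2 C : R, 0 <= C & forall a x xi, 0 < a -> a <= 1 -> K x ->
    `|aops [::] (Fmul F G a) x xi| <= C * Wmul w1 w2 a x xi * mu [::] a x xi.
Proof.
move=> BF BG.
have [C1 C10 H1] := BF [::] isT; have [C2 C20 H2] := BG [::] isT.
exists (C1 * C2); first exact: mulr_ge0.
move=> a x xi a0 a1 Kx /=; rewrite /fmul normrM /Wmul /mu big_nil mulr1.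
have := H1 a x xi a0 a1 Kx; have := H2 a x xi a0 a1 Kx.
rewrite /= /mu big_nil !mulr1 => h2 h1.
have -> : C1 * C2 * (w1 a x xi * w2 a x xi) = (C1 * w1 a x xi) * (C2 * w2 a x xi) by ring.
by apply: ler_pM.
Qed.

Lemma BdN_mul N F G w1 w2 : GF N F -> GF N G -> BdN N F w1 -> BdN N G w2 ->
  BdN N (Fmul F G) (Wmul w1 w2).
Proof.
elim: N F G w1 w2 => [|N IH] F G w1 w2 GFF GFG BF BG ds sds.
  case: ds sds => // _; exact: BdN_mul0.
case/lastP: ds sds => [|ds o] sds.
  by apply: BdN_mul0; apply: BdN_le BF || apply: BdN_le BG.
rewrite size_rcons ltnS in sds.
have GFF' := GF_le (leqnSn N) GFF; have GFG' := GF_le (leqnSn N) GFG.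
have B1 := IH (Fop o F) G _ _ (GF_op o GFF) GFG' (BdN_op o BF) (BdN_le (leqnSn N) BG).
have B2 := IH F (Fop o G) _ _ GFF' (GF_op o GFG) (BdN_le (leqnSn N) BF) (BdN_op o BG).
have [C1 C10 H1] := B1 ds sds; have [C2 C20 H2] := B2 ds sds.
exists (C1 + C2); first exact: addr_ge0.
move=> a x xi a0 a1 Kx; have Ux := KU Kx.
have G0F : GoodN U 0 (F a) := GoodN_le (isT : (0 <= N.+1)%N) (GFF a a0).
have G0G : GoodN U 0 (G a) := GoodN_le (isT : (0 <= N.+1)%N) (GFG a a0).
rewrite aops_rcons /Fmul (eqU_aops oU ds (op_mul_eqU o G0F G0G) xi Ux).
have GA : GoodN U N (fmul (op o (F a)) (G a)).
  by apply: (GoodN_mul oU); [exact: GoodN_op (GFF a a0) | exact: GFG' a a0].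
have GB : GoodN U N (fmul (F a) (op o (G a))).
  by apply: (GoodN_mul oU); [exact: GFF' a a0 | exact: GoodN_op (GFG a a0)].
rewrite ((GoodN_add oU GA GB).1 ds (leqW sds) x xi Ux) /fadd mu_rcons.
apply: le_trans (ler_normD _ _) _.
have -> : (C1 + C2) * Wmul w1 w2 a x xi * (mu ds a x xi * fac o a x xi) =
  C1 * Wmul (fun a x xi => w1 a x xi * fac o a x xi) w2 a x xi * mu ds a x xi +
  C2 * Wmul w1 (fun a x xi => w2 a x xi * fac o a x xi) a x xi * mu ds a x xi.
  by rewrite /Wmul; ring.
apply: lerD; [exact: H1 | exact: H2].
Qed.

Lemma BdN_ofop N F w : BdN 0 F w ->
  (forall o, BdN N (Fop o F) (fun a x xi => w a x xi * fac o a x xi)) ->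
  BdN N.+1 F w.
Proof.
move=> B0 Bo; case/lastP => [|ds o] sds; first exact: B0.
rewrite size_rcons ltnS in sds.
have [C C0 H] := Bo o ds sds; exists C => // a x xi a0 a1 Kx.
rewrite aops_rcons mu_rcons.
have -> : C * w a x xi * (mu ds a x xi * fac o a x xi) =
  C * (w a x xi * fac o a x xi) * mu ds a x xi by ring.
exact: H.
Qed.

Lemma BdN_eqU N F G w : (forall a, 0 < a -> eqU U (F a) (G a)) ->
  BdN N F w -> BdN N G w.
Proof.
move=> e B ds sds; have [C C0 H] := B ds sds; exists C => // a x xi a0 a1 Kx.
rewrite -(eqU_aops oU ds (e a a0) xi (KU Kx)); exact: H.
Qed.

Lemma GF_eqU N F G : (forall a, 0 < a -> eqU U (F a) (G a)) -> GF N F -> GF N G.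
Proof.
move=> e GG a a0 ds sds o x xi Ux.
apply: (eqU_dvb oU (eqU_aops oU ds (e a a0))) => //; exact: GG.
Qed.

Lemma GF_add N F G : GF N F -> GF N G -> GF N (Fadd F G).
Proof. by move=> G1 G2 a a0; exact: (GoodN_add oU (G1 a a0) (G2 a a0)).2. Qed.

Lemma GF_mul N F G : GF N F -> GF N G -> GF N (Fmul F G).
Proof. by move=> G1 G2 a a0; exact: (GoodN_mul oU (G1 a a0) (G2 a a0)). Qed.

Lemma GF_scal N (c : R -> R) F : GF N F -> GF N (fun a => fscal (c a) (F a)).
Proof. by move=> G1 a a0; exact: (GoodN_scal oU (c a) (G1 a a0)).2. Qed.

Lemma GF_cst N (c : R -> R) : GF N (fun a => fcst (c a)).
Proof. by move=> a a0; exact: GoodN_cst. Qed.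

Lemma aops_cst (ds : seq (bool * 'I_n)) (c : R) : aops ds (fcst c) = fcst (if ds is [::] then c else 0).
Proof. by elim: ds => [|o' ds IH] //=; rewrite IH; exact: op_cst. Qed.

Lemma BdN_cst N (c : R -> R) (B : R) :
  (forall a, 0 < a -> a <= 1 -> `|c a| <= B) ->
  BdN N (fun a => fcst (c a)) (fun _ _ _ => 1).
Proof.
move=> cB ds _; exists (Num.max B 0); first by rewrite le_max lexx orbT.
move=> a x xi a0 a1 Kx; rewrite aops_cst mulr1.
case: ds => [|o ds] /=; rewrite /fcst /mu.
  by rewrite big_nil mulr1; apply: le_trans (cB a a0 a1) _; rewrite le_max lexx.
by rewrite normr0 mulr_ge0 // ?le_max ?lexx ?orbT // -/(mu _ _ _ _) mu_ge0.
Qed.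

End Bounds.

Section G.
Variable R : realType.

Lemma f0_derive (a u : R) : derivable (fun u : R => 1 + u / a) u 1 /\
  derive (fun u : R => 1 + u / a) u 1 = a^-1.
Proof.
have d1 : derivable (fun u : R => u * a^-1) u 1.
  exact: (derivableM (@derivable_id _ _ u 1) (derivable_cst a^-1 u 1)).
have e1 : derive (fun u : R => u * a^-1) u 1 = a^-1.
  have := deriveM (@derivable_id _ _ u 1) (derivable_cst a^-1 u 1) => /= ->.
  by rewrite derive_cst derive_id /GRing.scale /= mulr0 add0r mulr1.
split.
  exact: (derivableD (derivable_cst (1:R) u 1) d1).
have := deriveD (derivable_cst (1:R) u 1) d1 => /= ->.
by rewrite derive_cst add0r e1.
Qed.

Lemma g_is_derive (a e u : R) : 0 < 1 + u / a ->
  is_derive u 1 (fun u => (1 + u / a) `^ e) (e * (1 + u / a) `^ (e - 1) / a).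
Proof.
move=> pos; have [d0 e0] := f0_derive a u.
have := chain_rule d0 (is_derive1_powR e pos) => -[dd ed].
apply: DeriveDef; first exact: dd.
by have := ed => /= ->; rewrite e0.
Qed.

End G.

Lemma GoodN_ofop (R : realType) (n : nat) (U : set 'rV[R]_n) N H :
  GoodN U 0 H -> (forall o, GoodN U N (op o H)) -> GoodN U N.+1 H.
Proof.
move=> G0 Go; case/lastP => [|ds o] sds; first exact: G0.
rewrite size_rcons ltnS in sds; rewrite aops_rcons; exact: Go.
Qed.

Section Phi.
Variables (R : realType) (n : nat) (U : set 'rV[R]_n).
Hypothesis oU : open U.
Local Notation V := 'rV[R]_n.
Variables (K : set V) (fac : bool * 'I_n -> R -> V -> V -> R).
Hypothesis KU : K `<=` U.
Hypothesis fac0 : forall o a x xi, 0 <= fac o a x xi.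
Variable s : V -> V -> R.
Hypothesis s0 : forall x xi, U x -> 0 <= s x xi.
Hypothesis Gs : forall N, GoodN U N s.
Hypothesis Bs : forall N, BdN K fac N (fun _ => s) (fun a x xi => a + s x xi).

Definition phi (e : R) : R -> V -> V -> R := fun a x xi => (1 + s x xi / a) `^ e.

Lemma pos_base a x xi : 0 < a -> U x -> 0 < 1 + s x xi / a.
Proof. move=> a0 Ux; have := divr_ge0 (s0 xi Ux) (ltW a0); lra. Qed.

Lemma dphi e a o x xi : 0 < a -> U x -> dvb o s x xi ->
  dvb o (phi e a) x xi /\ op o (phi e a) x xi = e / a * phi (e - 1) a x xi * op o s x xi.
Proof.
move=> a0 Ux; case: o => [[] i]; rewrite /dvb /op /dx /dxi /= => ds.
  have := chain_rule ds (g_is_derive e (pos_base xi a0 Ux)) => -[dd ed].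
  split; first exact: dd.
  transitivity (derive ((fun u => (1 + u / a) `^ e) \o (fun y => s y xi)) x (evec R i)); first by [].
  by rewrite ed /phi; ring.
have := chain_rule ds (g_is_derive e (pos_base xi a0 Ux)) => -[dd ed].
split; first exact: dd.
transitivity (derive ((fun u => (1 + u / a) `^ e) \o (s x)) xi (evec R i)); first by [].
by rewrite ed /phi; ring.
Qed.

Lemma eq_dphi e a o : 0 < a ->
  eqU U (op o (phi e a)) (fmul (fscal (e / a) (phi (e - 1) a)) (op o s)).
Proof. by move=> a0 x xi Ux; exact: (dphi e a0 Ux (@Gs 0 [::] isT o x xi Ux)).2. Qed.

Lemma GF_phi N e : GF U N (phi e).
Proof.
elim: N e => [|N IH] e a a0.
  case => // _ o x xi Ux; exact: (dphi e a0 Ux (@Gs 0 [::] isT o x xi Ux)).1.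
apply: GoodN_ofop.
  case => // _ o x xi Ux; exact: (dphi e a0 Ux (@Gs 0 [::] isT o x xi Ux)).1.
move=> o ds sds o' x xi Ux.
apply: (eqU_dvb oU (eqU_aops oU ds (eqU_sym (eq_dphi e o a0)))) => //.
have GM : GoodN U N (fmul (fscal (e / a) (phi (e - 1) a)) (op o s)).
  apply: (GoodN_mul oU).
    exact: (GoodN_scal oU _ (IH (e - 1) a a0)).2.
  exact: GoodN_op (@Gs N.+1).
exact: GM.
Qed.

Lemma Bd_phi0 e : BdN K fac 0 (phi e) (phi e).
Proof.
case => // _; exists 1 => // a x xi a0 a1 Kx /=.
rewrite /mu big_nil !mul1r mulr1 ger0_norm //; exact: powR_ge0.
Qed.

Lemma Bd_phi N e : BdN K fac N (phi e) (phi e).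
Proof.
elim: N e => [|N IH] e; first exact: Bd_phi0.
apply: BdN_ofop; first exact: Bd_phi0.
move=> o.
have GA : GF U N (fun a => fscal (e / a) (phi (e - 1) a)).
  have h := GF_scal oU (fun a => e / a) (GF_phi (N:=N) (e - 1)). exact: h.
have GB : GF U N (Fop o (fun _ => s)).
  by apply: GF_op => a a0; exact: Gs.
have BA := BdN_scal oU KU (fun a => e / a) (GF_phi (N:=N) (e - 1)) (IH (e - 1)).
have BB := BdN_op o (@Bs N.+1).
have BM := BdN_mul oU KU GA GB BA BB.
have BM' := BdN_eqU oU KU (G := Fop o (phi e)) (fun a a0 => eqU_sym (eq_dphi e o a0)) BM.
apply: (BdN_w fac0 (c := `|e|)) _ _ BM' => //.
move=> a x xi a0 a1 Kx; rewrite /Wmul.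
have pb := pos_base xi a0 (KU Kx).
have -> : phi e a x xi = phi (e - 1) a x xi * (1 + s x xi / a).
  rewrite /phi -[X in _ = _ * X](powRr1 (ltW pb)) -powRD ?subrK //.
  by apply/implyP => _; rewrite gt_eqF.
rewrite normrM normfV (gtr0_norm a0) le_eqVlt; apply/orP; left; apply/eqP.
by field; rewrite gt_eqF.
Qed.

End Phi.

Lemma bnd_compact (R : realType) (n : nat) (K : set 'rV[R]_n) (f : 'rV[R]_n -> R) :
  compact K -> (forall x, K x -> {for x, continuous f}) ->
  exists M, forall x, K x -> `|f x| <= M.
Proof.
move=> cK fc.
case: (pselect (K !=set0)) => [K0|K0]; last first.
  by exists 0 => x Kx; exfalso; apply: K0; exists x.
have cn : {within K, continuous (Num.norm \o f)}.
  apply: continuous_in_subspaceT => x; rewrite inE => Kx.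
  apply: continuous_comp; [exact: fc | exact: norm_continuous].
have [c Kc H] := EVT_max_rV K0 cK cn.
by exists `|f c| => x Kx; exact: (H x (mem_set Kx)).
Qed.

Section Coef.
Variables (R : realType) (n : nat) (U : set 'rV[R]_n).
Local Notation V := 'rV[R]_n.
Variable c : V -> R.

Lemma aops_coef (ds : seq (bool * 'I_n)) :
  aops ds (fun x (_ : V) => c x) =
  if all fst ds then (fun x _ => iter_partial (map snd ds) c x) else fcst 0.
Proof.
elim: ds => [|[[] i] ds IH] //=; rewrite IH.
  by case: (all fst ds) => //; exact: op_cst.
case: (all fst ds) => /=; last exact: op_cst.
apply/funext => x; apply/funext => xi; rewrite /op /dxi /=; exact: derive_cst.
Qed.

End Coef.

Section Classes.
Variables (R : realType) (n : nat) (U : set 'rV[R]_n).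
Hypothesis oU : open U.
Local Notation V := 'rV[R]_n.
Variable K : set V.
Hypothesis KU : K `<=` U.
Hypothesis cK : compact K.

Definition facP (o : bool * 'I_n) (a : R) (x xi : V) : R :=
  if o.1 then 1 else (japan xi)^-1.

Lemma japan_ge1 (xi : V) : 1 <= japan xi.
Proof.
rewrite /japan -{1}sqrtr1 ler_sqrt; last by rewrite addr_ge0 // sqr_ge0.
by rewrite lerDl sqr_ge0.
Qed.

Lemma japan_gt0 (xi : V) : 0 < japan xi.
Proof. exact: lt_le_trans (japan_ge1 xi). Qed.

Lemma facP0 o a x xi : 0 <= facP o a x xi.
Proof. by rewrite /facP; case: o.1 => //; rewrite invr_ge0 ltW // japan_gt0. Qed.

Definition Good (F : R -> V -> V -> R) := forall N, GF U N F.
Definition SymP (F w : R -> V -> V -> R) := forall N, BdN K facP N F w.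

Lemma mu_facP_x ds a x xi : all fst ds -> mu facP ds a x xi = 1.
Proof.
move=> al; rewrite /mu big1_seq // => o /andP[_ oin].
by rewrite /facP (allP al o oin).
Qed.

Lemma coef_class (c : V -> R) : smooth_on U c ->
  Good (fun _ x _ => c x) /\ SymP (fun _ x _ => c x) (fun _ _ _ => 1).
Proof.
move=> sm; split.
  move=> N a a0 ds sds o x xi Ux; rewrite aops_coef; case: ifP => al; last exact: dvb_cst.
  case: o => [[] i]; rewrite /dvb /=; last exact: derivable_cst.
  exact: (sm (map snd ds) x Ux).1 i.
move=> N ds sds.
have [M HM] := bnd_compact cK (fun x Kx => (sm (map snd ds) x (KU Kx)).2).
exists (Num.max M 0); first by rewrite le_max lexx orbT.
move=> a x xi a0 a1 Kx; rewrite aops_coef; case: ifP => al.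
  rewrite mu_facP_x // !mulr1; apply: le_trans (HM x Kx) _; by rewrite le_max lexx.
rewrite /fcst normr0 mulr_ge0 // ?mulr_ge0 ?le_max ?lexx ?orbT //.
exact: mu_ge0 facP0 _ _ _ _.
Qed.

Lemma Good_add F G : Good F -> Good G -> Good (Fadd F G).
Proof. by move=> G1 G2 N; have h := GF_add oU (G1 N) (G2 N); exact: h. Qed.
Lemma Good_mul F G : Good F -> Good G -> Good (Fmul F G).
Proof. by move=> G1 G2 N; have h := GF_mul oU (G1 N) (G2 N); exact: h. Qed.
Lemma Good_cst (c : R -> R) : Good (fun a => fcst (c a)).
Proof. by move=> N; have h := GF_cst; exact: h. Qed.
Lemma SymP_add F G w : Good F -> Good G -> SymP F w -> SymP G w -> SymP (Fadd F G) w.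
Proof. by move=> G1 G2 B1 B2 N; have h := BdN_add oU KU (G1 N) (G2 N) (B1 N) (B2 N); exact: h. Qed.
Lemma SymP_mul F G w1 w2 : Good F -> Good G -> SymP F w1 -> SymP G w2 ->
  SymP (Fmul F G) (Wmul w1 w2).
Proof. by move=> G1 G2 B1 B2 N; have h := BdN_mul oU KU (G1 N) (G2 N) (B1 N) (B2 N); exact: h. Qed.
Lemma SymP_w F w w' (c : R) : 0 <= c ->
  (forall a x xi, 0 < a -> a <= 1 -> K x -> w a x xi <= c * w' a x xi) ->
  SymP F w -> SymP F w'.
Proof. by move=> c0 ww B N; have h := BdN_w facP0 c0 ww (B N); exact: h. Qed.
Lemma SymP_cst (c : R -> R) (B : R) : (forall a, 0 < a -> a <= 1 -> `|c a| <= B) ->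
  SymP (fun a => fcst (c a)) (fun _ _ _ => 1).
Proof. by move=> cB N; have h := BdN_cst K facP0 (N:=N) cB; exact: h. Qed.
Lemma SymP_zero w : SymP (fun _ => fcst 0) w.
Proof.
move=> N ds _; exists 0 => // a x xi _ _ _.
by rewrite aops_cst /fcst; case: ds => [|? ?]; rewrite normr0 !mul0r.
Qed.

Lemma coord_derive (xi : V) (i j : 'I_n) :
  derivable (fun eta : V => eta 0 j) xi (evec R i) /\
  derive (fun eta : V => eta 0 j) xi (evec R i) = (i == j)%:R.
Proof.
have E : (fun h : R => (h *: evec R i + xi) 0 j) = (fun h => h * (i == j)%:R + xi 0 j).
  by apply/funext => h; rewrite !mxE /evec eqxx /= eq_sym.
have d1 : derivable (fun h : R => h * (i == j)%:R) 0 1.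
  exact: (derivableM (@derivable_id _ _ (0:R) 1) (derivable_cst ((i == j)%:R : R) (0:R) 1)).
have d2 : derivable (fun h : R => h * (i == j)%:R + xi 0 j) 0 1.
  exact: (derivableD d1 (derivable_cst (xi 0 j) (0:R) 1)).
split; first by apply/derivable1P; rewrite E.
rewrite deriveE1 E.
have := deriveD d1 (derivable_cst (xi 0 j) (0:R) 1) => /= ->.
have := deriveM (@derivable_id _ _ (0:R) 1) (derivable_cst ((i == j)%:R : R) (0:R) 1) => /= ->.
by rewrite !derive_cst derive_id scaler0 add0r addr0 /GRing.scale /= mulr1.
Qed.

Definition coordF (j : 'I_n) : V -> V -> R := fun x xi => xi 0 j.

Lemma op_coord o j : op o (coordF j) =
  fcst (if o.1 then 0 else (o.2 == j)%:R).
Proof.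
apply/funext => x; apply/funext => xi.
case: o => [[] i]; rewrite /op /dx /dxi /coordF /fcst /=; first exact: derive_cst.
exact: (coord_derive xi i j).2.
Qed.

Lemma aops_coord (ds : seq (bool * 'I_n)) j : aops ds (coordF j) =
  match ds with [::] => coordF j | [:: o] => fcst (if o.1 then 0 else (o.2 == j)%:R)
  | _ => fcst 0 end.
Proof.
elim: ds => [|o ds IH] //=; rewrite IH.
case: ds IH => [|o' [|o'' ds]] _ /=; [exact: op_coord | exact: op_cst | exact: op_cst].
Qed.

Lemma coord_le_japan (xi : V) j : `|xi 0 j| <= japan xi.
Proof.
have S0 : 0 <= \sum_i xi 0 i ^+ 2 by apply: sumr_ge0 => i _; exact: sqr_ge0.
apply: (@le_trans _ _ (enorm xi)).
  rewrite /enorm -sqrtr_sqr ler_sqrt // (bigD1 j) //= lerDl.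
  by apply: sumr_ge0 => i _; exact: sqr_ge0.
rewrite /japan; set e := enorm xi.
have e0 : 0 <= e by exact: sqrtr_ge0.
rewrite -[X in X <= _](ger0_norm e0) -sqrtr_sqr ler_sqrt; last by rewrite addr_ge0 // sqr_ge0.
by rewrite lerDr.
Qed.

Lemma coord_class j : Good (fun _ => coordF j) /\
  SymP (fun _ => coordF j) (fun _ _ xi => japan xi).
Proof.
split.
  move=> N a a0 ds sds o x xi Ux; rewrite aops_coord.
  case: ds sds => [|o1 [|o2 ds]] _ /=; [ | exact: dvb_cst | exact: dvb_cst].
  case: o => [[] i]; rewrite /dvb /coordF /=; first exact: derivable_cst.
  exact: (coord_derive xi i j).1.
move=> N ds _; exists 1 => // a x xi _ _ _; rewrite aops_coord mul1r.
have J0 := japan_gt0 xi.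
case: ds => [|o [|o2 ds]] /=.
- by rewrite /mu big_nil mulr1; exact: coord_le_japan.
- rewrite /mu big_seq1 /facP /fcst; case: o => [[] i] /=; first by rewrite normr0 mulr1 ltW.
  rewrite divff; last by rewrite gt_eqF.
  by case: (i == j); rewrite ?normr1 ?normr0.
- rewrite /fcst normr0; apply: mulr_ge0; [exact: ltW | exact: (mu_ge0 facP0)].
Qed.

Lemma prod_class (I : Type) (r : seq I) (F w : I -> R -> V -> V -> R) :
  (forall i, Good (F i)) -> (forall i, SymP (F i) (w i)) ->
  Good (fun a x xi => \prod_(i <- r) F i a x xi) /\
  SymP (fun a x xi => \prod_(i <- r) F i a x xi) (fun a x xi => \prod_(i <- r) w i a x xi).
Proof.
move=> GF1 SF1; elim: r => [|k r [IHg IHs]].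
  have -> : (fun a x xi => \prod_(i <- [::]) F i a x xi) = (fun a => fcst 1).
    by apply/funext => a; apply/funext => x; apply/funext => xi; rewrite big_nil.
  have -> : (fun a x xi => \prod_(i <- [::]) w i a x xi) = (fun _ _ _ => 1).
    by apply/funext => a; apply/funext => x; apply/funext => xi; rewrite big_nil.
  by split; [exact: Good_cst | apply: (@SymP_cst (fun _ => 1) 1) => a; rewrite normr1].
have -> : (fun a x xi => \prod_(i <- k :: r) F i a x xi) =
  Fmul (F k) (fun a x xi => \prod_(i <- r) F i a x xi).
  by apply/funext => a; apply/funext => x; apply/funext => xi; rewrite big_cons.
have -> : (fun a x xi => \prod_(i <- k :: r) w i a x xi) =
  Wmul (w k) (fun a x xi => \prod_(i <- r) w i a x xi).
  by apply/funext => a; apply/funext => x; apply/funext => xi; rewrite big_cons.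
by split; [exact: Good_mul | exact: SymP_mul].
Qed.

Lemma pow_class (F w : R -> V -> V -> R) k : Good F -> SymP F w ->
  Good (fun a x xi => F a x xi ^+ k) /\ SymP (fun a x xi => F a x xi ^+ k) (fun a x xi => w a x xi ^+ k).
Proof.
move=> G1 S1; elim: k => [|k [IHg IHs]].
  have -> : (fun a x xi => F a x xi ^+ 0) = (fun a => fcst 1).
    by apply/funext => a; apply/funext => x; apply/funext => xi; rewrite expr0.
  have -> : (fun a x xi => w a x xi ^+ 0) = (fun _ _ _ => 1).
    by apply/funext => a; apply/funext => x; apply/funext => xi; rewrite expr0.
  by split; [exact: Good_cst | apply: (@SymP_cst (fun _ => 1) 1) => a; rewrite normr1].
have -> : (fun a x xi => F a x xi ^+ k.+1) = Fmul F (fun a x xi => F a x xi ^+ k).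
  by apply/funext => a; apply/funext => x; apply/funext => xi; rewrite exprS.
have -> : (fun a x xi => w a x xi ^+ k.+1) = Wmul w (fun a x xi => w a x xi ^+ k).
  by apply/funext => a; apply/funext => x; apply/funext => xi; rewrite exprS.
by split; [exact: Good_mul | exact: SymP_mul].
Qed.

Lemma sum_class (I : Type) (r : seq I) (P : pred I) (F : I -> R -> V -> V -> R) w :
  (forall i, P i -> Good (F i) /\ SymP (F i) w) ->
  Good (fun a x xi => \sum_(i <- r | P i) F i a x xi) /\
  SymP (fun a x xi => \sum_(i <- r | P i) F i a x xi) w.
Proof.
move=> H; elim: r => [|k r [IHg IHs]].
  have -> : (fun a x xi => \sum_(i <- [::] | P i) F i a x xi) = (fun a => fcst 0).
    by apply/funext => a; apply/funext => x; apply/funext => xi; rewrite big_nil.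
  by split; [exact: Good_cst | exact: SymP_zero].
case Pk : (P k).
  have -> : (fun a x xi => \sum_(i <- k :: r | P i) F i a x xi) =
    Fadd (F k) (fun a x xi => \sum_(i <- r | P i) F i a x xi).
    by apply/funext => a; apply/funext => x; apply/funext => xi; rewrite big_cons Pk.
  have [Gk Sk] := H k Pk.
  by split; [exact: Good_add | exact: SymP_add].
have -> : (fun a x xi => \sum_(i <- k :: r | P i) F i a x xi) =
  (fun a x xi => \sum_(i <- r | P i) F i a x xi).
  by apply/funext => a; apply/funext => x; apply/funext => xi; rewrite big_cons Pk.
by split.
Qed.

End Classes.

Section Poly.
Variables (R : realType) (n m : nat) (U : set 'rV[R]_n).
Hypothesis oU : open U.
Local Notation V := 'rV[R]_n.
Variable K : set V.
Hypothesis KU : K `<=` U.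
Hypothesis cK : compact K.

Lemma monom_class (a : {ffun 'I_n -> 'I_m.+1}) :
  Good U (fun _ _ xi => monom xi a) /\
  SymP K (fun _ _ xi => monom xi a) (fun _ _ xi => japan xi ^+ mdeg a).
Proof.
have H i := pow_class oU KU (a i) (coord_class U K i).1 (coord_class U K i).2.
have [G S] := prod_class oU KU (index_enum 'I_n) (fun i => (H i).1) (fun i => (H i).2).
split; first by [].
apply: (SymP_w (c := 1)) S => // b x xi _ _ _.
by rewrite mul1r prodrXr.
Qed.

Lemma poly_class (cs : {ffun 'I_n -> 'I_m.+1} -> V -> R) (P : pred {ffun 'I_n -> 'I_m.+1}) d :
  (forall a, P a -> smooth_on U (cs a)) -> (forall a, P a -> (mdeg a <= d)%N) ->
  Good U (fun _ x xi => \sum_(a | P a) cs a x * monom xi a) /\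
  SymP K (fun _ x xi => \sum_(a | P a) cs a x * monom xi a) (fun _ _ xi => japan xi ^+ d).
Proof.
move=> sm dg.
have T a : P a -> Good U (Fmul (fun _ x _ => cs a x) (fun _ _ xi => monom xi a)) /\
   SymP K (Fmul (fun _ x _ => cs a x) (fun _ _ xi => monom xi a)) (fun _ _ xi => japan xi ^+ d).
  move=> Pa; have [G1 S1] := coef_class KU cK (sm a Pa).
  have [G2 S2] := monom_class a.
  split; first by have h := Good_mul oU G1 G2; exact: h.
  apply: (SymP_w (c := 1)) (SymP_mul oU KU G1 G2 S1 S2) => // b x xi _ _ _.
  rewrite /Wmul !mul1r; apply: ler_weXn2l; [exact: japan_ge1 | exact: dg].
have [G S] := sum_class oU KU (index_enum _) T.
by split; [exact: G | exact: S].
Qed.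

End Poly.

Lemma SymP_0 (R : realType) (n : nat) (K : set 'rV[R]_n) F w : SymP K F w ->
  exists2 C : R, 0 <= C & forall a x xi, 0 < a -> a <= 1 -> K x ->
    `|F a x xi| <= C * w a x xi.
Proof.
move=> S; have [C C0 H] := S 0%N [::] isT; exists C => // a x xi a0 a1 Kx.
by have := H a x xi a0 a1 Kx; rewrite /mu big_nil mulr1.
Qed.

Section Real.
Variable R : realType.

Lemma pow_le (x y : R) k : 0 <= x -> x <= y -> x ^+ k <= y ^+ k.
Proof.
move=> x0 xy; elim: k => [|k IH]; first by rewrite !expr0.
rewrite !exprS; apply: ler_pM => //; exact: exprn_ge0.
Qed.

Lemma onep_pow (x : R) k : 0 <= x -> (1 + x) ^+ k <= 2 ^+ k * (1 + x ^+ k).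
Proof.
move=> x0; have xk0 := exprn_ge0 k x0.
case: (lerP x 1) => hx.
  apply: le_trans (pow_le k _ (_ : 1 + x <= 2)) _; [lra | lra |].
  rewrite -[X in X <= _]mulr1 ler_wpM2l ?exprn_ge0 //; lra.
apply: le_trans (pow_le k _ (_ : 1 + x <= 2 * x)) _; [lra | lra |].
rewrite exprMn ler_wpM2l ?exprn_ge0 //; lra.
Qed.

Lemma absorb (J D X : R) k : 1 <= J -> 0 <= D -> 0 <= X ->
  J ^+ k.+1 <= X + D * J ^+ k -> J ^+ k.+1 <= 2 * X + (2 * D) ^+ k.+1.
Proof.
move=> J1 D0 X0 h.
have P0 : 0 <= J ^+ k by apply: exprn_ge0; lra.
case: (lerP J (2 * D)) => hJ.
  apply: le_trans (pow_le k.+1 _ hJ) _; first lra.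
  lra.
have h2 : 2 * D * J ^+ k <= J * J ^+ k by apply: ler_wpM2r => //; exact: ltW.
have h3 : 0 <= (2 * D) ^+ k.+1 by apply: exprn_ge0; lra.
move: h; rewrite exprS => h.
have : J * J ^+ k <= 2 * X by nra.
lra.
Qed.

Lemma sqrt_sum_le (P Q : R) : Num.sqrt (P ^+ 2 + Q ^+ 2) <= `|P| + `|Q|.
Proof.
rewrite -(ger0_norm (addr_ge0 (normr_ge0 P) (normr_ge0 Q))) -sqrtr_sqr ler_sqrt ?sqr_ge0 //.
rewrite -[P ^+ 2]real_normK ?num_real // -[Q ^+ 2]real_normK ?num_real //.
rewrite sqrrD -addrA lerD2l; apply: ler_wpDl => //; apply: mulrn_wge0; exact: mulr_ge0.
Qed.

Lemma L_J (J En : R) : 0 <= En -> 0 <= J -> J ^+ 2 = 1 + En ^+ 2 -> J <= 1 + En.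
Proof.
move=> En0 J0 JE.
move: JE; rewrite !expr2 => JE; nra.
Qed.

Lemma L_fin (p C0 Z a3 rs r : R) : 0 <= p -> 0 < C0 -> 0 <= Z -> 0 <= a3 ->
  0 <= rs -> rs <= r -> 1 <= r ->
  2 * (p * (1 + C0 * (2 * rs + Z))) + a3 <= (2 * p * (1 + C0 * Z) + 2 * p * C0 * 2 + a3) * r.
Proof.
move=> p0 C00 Z0 a30 rs0 rsr r1.
have c1 : 0 <= p * (1 + C0 * Z) by apply: mulr_ge0 => //; have := mulr_ge0 (ltW C00) Z0; lra.
have c2 : 0 <= p * C0 by apply: mulr_ge0 => //; lra.
have e1 : 2 * (p * (1 + C0 * (2 * rs + Z))) + a3 = 2 * (p * (1 + C0 * Z)) + 4 * (p * C0) * rs + a3 by ring.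
have e2 : (2 * p * (1 + C0 * Z) + 2 * p * C0 * 2 + a3) * r =
  2 * ((p * (1 + C0 * Z)) * r) + 4 * ((p * C0) * r) + a3 * r by ring.
rewrite e1 e2.
have h1 : (p * (1 + C0 * Z)) <= (p * (1 + C0 * Z)) * r.
  by rewrite -[X in X <= _]mulr1 ler_wpM2l.
have h2 : (p * C0) * rs <= (p * C0) * r by rewrite ler_wpM2l.
have h3 : a3 <= a3 * r by rewrite -[X in X <= _]mulr1 ler_wpM2l.
move: h1 h2 h3 c1 c2; clear; set u := p * (1 + C0 * Z); set v := p * C0.
lra.
Qed.

Lemma ellip_point k (J En C0 P Q qr qi lr li zr zi Bl s : R) :
  1 <= J -> J ^+ 2 = 1 + En ^+ 2 -> 0 <= En -> 0 < C0 -> 0 <= Bl -> 0 <= s ->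
  En ^+ k.+1 / C0 <= Num.sqrt (P ^+ 2 + Q ^+ 2) ->
  P = qr - lr + zr -> Q = qi - li + zi ->
  `|qr| <= Num.sqrt s -> `|qi| <= Num.sqrt s ->
  `|lr| <= Bl * J ^+ k -> `|li| <= Bl * J ^+ k ->
  J ^+ k.+1 <= (2 * 2 ^+ k.+1 * (1 + C0 * (`|zr| + `|zi|)) + 2 * 2 ^+ k.+1 * C0 * 2
                + (2 * (2 ^+ k.+1 * C0 * 2 * Bl)) ^+ k.+1) * Num.sqrt (1 + s).
Proof.
move=> J1 JE En0 C00 Bl0 s0 hE eP eQ hqr hqi hlr hli.
have rs0 : 0 <= Num.sqrt s by exact: sqrtr_ge0.
have r1 : 1 <= Num.sqrt (1 + s) by rewrite -[X in X <= _]sqrtr1 ler_sqrt; lra.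
have rsr : Num.sqrt s <= Num.sqrt (1 + s) by rewrite ler_sqrt; lra.
have Z0 : 0 <= `|zr| + `|zi| by rewrite addr_ge0.
have Jk0 : 0 <= J ^+ k by apply: exprn_ge0; lra.
have hP : `|P| <= Num.sqrt s + Bl * J ^+ k + `|zr|.
  rewrite eP; apply: le_trans (ler_normD _ _) _; apply: lerD => //.
  apply: le_trans (ler_normB _ _) _; exact: lerD.
have hQ : `|Q| <= Num.sqrt s + Bl * J ^+ k + `|zi|.
  rewrite eQ; apply: le_trans (ler_normD _ _) _; apply: lerD => //.
  apply: le_trans (ler_normB _ _) _; exact: lerD.
have hEn : En ^+ k.+1 <= C0 * (2 * Num.sqrt s + 2 * Bl * J ^+ k + (`|zr| + `|zi|)).
  rewrite -ler_pdivrMl //; rewrite mulrC.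
  apply: le_trans hE _; apply: le_trans (sqrt_sum_le P Q) _.
  move: hP hQ; clear; lra.
have JEn : J <= 1 + En by apply: L_J => //; lra.
have p0 : 0 <= 2 ^+ k.+1 :> R by apply: exprn_ge0.
have hJ : J ^+ k.+1 <= 2 ^+ k.+1 * (1 + C0 * (2 * Num.sqrt s + (`|zr| + `|zi|)))
                      + 2 ^+ k.+1 * C0 * 2 * Bl * J ^+ k.
  apply: le_trans (pow_le k.+1 _ JEn) _; first lra.
  apply: le_trans (onep_pow k.+1 En0) _.
  have : 2 ^+ k.+1 * (1 + En ^+ k.+1) <=
         2 ^+ k.+1 * (1 + C0 * (2 * Num.sqrt s + 2 * Bl * J ^+ k + (`|zr| + `|zi|))).
    by apply: ler_wpM2l => //; rewrite lerD2l.
  move=> h; apply: le_trans h _; rewrite le_eqVlt; apply/orP; left; apply/eqP; ring.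
have X0 : 0 <= 2 ^+ k.+1 * (1 + C0 * (2 * Num.sqrt s + (`|zr| + `|zi|))).
  apply: mulr_ge0 => //.
  have : 0 <= C0 * (2 * Num.sqrt s + (`|zr| + `|zi|)) by apply: mulr_ge0; lra.
  move=> h; move: h; clear; lra.
have D0 : 0 <= 2 ^+ k.+1 * C0 * 2 * Bl.
  apply: mulr_ge0 => //; apply: mulr_ge0 => //; apply: mulr_ge0; [exact: exprn_ge0 | lra].
have habs := absorb J1 D0 X0 hJ.
apply: le_trans habs _.
apply: L_fin => //; apply: exprn_ge0; move: D0; clear; lra.
Qed.

End Real.

Section Transfer.
Variables (R : realType) (n : nat).
Local Notation V := 'rV[R]_n.
Variables (K : set V) (fac : bool * 'I_n -> R -> V -> V -> R) (L : R -> V -> V -> R).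
Hypothesis fac0 : forall o a x xi, 0 <= fac o a x xi.

Definition facL o a x xi := (L a x xi)^-1 * fac o a x xi.

Lemma mu_facL ds a x xi : mu facL ds a x xi = (L a x xi) ^- (size ds) * mu fac ds a x xi.
Proof.
elim: ds => [|o ds IH]; first by rewrite /mu !big_nil expr0 invr1 mul1r.
rewrite /mu !big_cons -/(mu _ _ _ _ _) -/(mu _ _ _ _ _) IH /facL /= exprS invfM; ring.
Qed.

Lemma transfer N F wP W (E : R) : 0 <= E ->
  (forall a x xi, 0 < a -> a <= 1 -> K x -> 0 < L a x xi <= 1) ->
  (forall a x xi, 0 < a -> a <= 1 -> K x -> `|F a x xi| <= W a x xi) ->
  (forall a x xi, 0 < a -> a <= 1 -> K x -> wP a x xi <= E * W a x xi * (L a x xi)^-1) ->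
  BdN K fac N F wP -> BdN K facL N F W.
Proof.
move=> E0 hL h0 hw B; case => [|o ds] sds.
  exists 1 => // a x xi a0 a1 Kx; rewrite /mu big_nil mulr1 mul1r; exact: h0.
have [C C0 H] := B (o :: ds) sds; exists (C * E); first exact: mulr_ge0.
move=> a x xi a0 a1 Kx; apply: le_trans (H a x xi a0 a1 Kx) _.
rewrite mu_facL /=.
have [L0 L1] := andP (hL a x xi a0 a1 Kx).
have Li1 : 1 <= (L a x xi)^-1 by rewrite invf_ge1.
have Li0 : 0 <= (L a x xi)^-1 by lra.
have Lk : 1 <= (L a x xi) ^- (size ds) by rewrite -exprVn exprn_ege1.
have M0 : 0 <= mu fac (o :: ds) a x xi by exact: mu_ge0.
have W0 : 0 <= W a x xi by apply: le_trans (h0 a x xi a0 a1 Kx); exact: normr_ge0.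
rewrite exprS invfM.
apply: (@le_trans _ _ (C * (E * W a x xi * (L a x xi)^-1) * mu fac (o :: ds) a x xi)).
  by apply: ler_wpM2r => //; apply: ler_wpM2l => //; exact: hw.
have -> : C * (E * W a x xi * (L a x xi)^-1) * mu fac (o :: ds) a x xi =
  C * E * W a x xi * ((L a x xi)^-1 * 1 * mu fac (o :: ds) a x xi) by ring.
apply: ler_wpM2l; first by apply: mulr_ge0 => //; exact: mulr_ge0.
by apply: ler_wpM2r => //; apply: ler_wpM2l.
Qed.

End Transfer.

Section Ops2.
Variables (R : realType) (n : nat).
Local Notation V := 'rV[R]_n.

Definition opsX (ta : 'I_n -> nat) (r : seq 'I_n) : seq (bool * 'I_n) :=
  flatten [seq nseq (ta i) (true, i) | i <- r].
Definition opsXi (ta : 'I_n -> nat) (r : seq 'I_n) : seq (bool * 'I_n) :=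
  flatten [seq nseq (ta i) (false, i) | i <- r].

Lemma iterX i k (H : V -> V -> R) : iter k (dx i) H = aops (nseq k (true, i)) H.
Proof. by elim: k => [|k IH] //=; rewrite IH. Qed.
Lemma iterXi i k (H : V -> V -> R) : iter k (dxi i) H = aops (nseq k (false, i)) H.
Proof. by elim: k => [|k IH] //=; rewrite IH. Qed.

Lemma dX_aops ta (H : V -> V -> R) : dX ta H = aops (opsX ta (enum 'I_n)) H.
Proof.
rewrite /dX /opsX; elim: (enum 'I_n) => [|i r IH] //=.
by rewrite IH iterX /aops foldr_cat.
Qed.

Lemma dXi_aops ta (H : V -> V -> R) : dXi ta H = aops (opsXi ta (enum 'I_n)) H.
Proof.
rewrite /dXi /opsXi; elim: (enum 'I_n) => [|i r IH] //=.
by rewrite IH iterXi /aops foldr_cat.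
Qed.

Lemma size_opsX ta r : size (opsX ta r) = (\sum_(i <- r) ta i)%N.
Proof. by elim: r => [|i r IH]; rewrite /opsX ?big_nil ?big_cons //= size_cat size_nseq -IH. Qed.
Lemma size_opsXi ta r : size (opsXi ta r) = (\sum_(i <- r) ta i)%N.
Proof. by elim: r => [|i r IH]; rewrite /opsXi ?big_nil ?big_cons //= size_cat size_nseq -IH. Qed.
Lemma count_opsX ta r : count (fun o : bool * 'I_n => ~~ o.1) (opsX ta r) = 0%N.
Proof.
elim: r => [|i r IH] //=; rewrite /opsX /= count_cat -/(opsX ta r) IH addn0.
by elim: (ta i) => //.
Qed.
Lemma count_opsXi ta r : count (fun o : bool * 'I_n => ~~ o.1) (opsXi ta r) = (\sum_(i <- r) ta i)%N.
Proof.
elim: r => [|i r IH]; rewrite ?big_nil ?big_cons //=.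
rewrite /opsXi /= count_cat -/(opsXi ta r) IH; congr (_ + _)%N.
by elim: (ta i) => //= k ->.
Qed.

Lemma mlen_enum (ta : 'I_n -> nat) : (\sum_(i <- enum 'I_n) ta i)%N = mlen ta.
Proof. by rewrite /mlen big_enum /=; apply: eq_bigl => i. Qed.

Lemma mu_facP ds (a : R) (x xi : V) :
  mu (@facP R n) ds a x xi = (japan xi) ^- (count (fun o : bool * 'I_n => ~~ o.1) ds).
Proof.
elim: ds => [|o ds IH]; first by rewrite /mu big_nil expr0 invr1.
rewrite /mu big_cons -/(mu _ _ _ _ _) IH /facP /=.
case: o.1 => /=; first by rewrite mul1r add0n.
by rewrite add1n exprS invfM.
Qed.

End Ops2.

Section Main.
Variables (R : realType) (n m : nat) (U : set 'rV[R]_n).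
Hypothesis oU : open U.
Local Notation V := 'rV[R]_n.
Local Notation FF := {ffun 'I_n -> 'I_m.+1}.
Variable K : set V.
Hypothesis KU : K `<=` U.
Hypothesis cK : compact K.

Lemma q_class (cs : FF -> V -> R) (z : R) :
  (forall a, (mdeg a <= m)%N -> smooth_on U (cs a)) ->
  Good U (fun _ x xi => symb cs x xi - z) /\
  SymP K (fun _ x xi => symb cs x xi - z) (fun _ _ xi => japan xi ^+ m).
Proof.
move=> sm.
have [G S] := poly_class oU KU cK (P := fun a => (mdeg a <= m)%N) (d := m) sm (fun a h => h).
have Gc : Good U (fun _ => fcst (- z)) by move=> N; apply: Good_cst.
have Sc : SymP K (fun _ => fcst (- z)) (fun _ _ xi => japan xi ^+ m).
  apply: (SymP_w (c := 1)) (SymP_cst K (c := fun _ => - z) (B := `|z|) _) => //.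
    by move=> a x xi _ _ _; rewrite mul1r; apply: exprn_ege1; exact: japan_ge1.
  by move=> a _ _; rewrite normrN.
split; first by have h := Good_add oU G Gc; exact: h.
by have h := SymP_add oU KU G Gc S Sc; exact: h.
Qed.

Lemma lower_bound (cs : FF -> V -> R) :
  (forall a, (mdeg a <= m)%N -> smooth_on U (cs a)) ->
  exists2 B : R, 0 <= B & forall x xi, K x ->
    `|\sum_(a | (mdeg a < m)%N) cs a x * monom xi a| <= B * japan xi ^+ m.-1.
Proof.
move=> sm.
have dg : forall a : FF, (mdeg a < m)%N -> (mdeg a <= m.-1)%N.
  by move=> a h; rewrite -ltnS prednK // (leq_ltn_trans (leq0n _) h).
have [G S] := poly_class oU KU cK (P := fun a => (mdeg a < m)%N) (d := m.-1)
  (fun a h => sm a (ltnW h)) dg.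
have [B B0 H] := SymP_0 S; exists B => // x xi Kx.
exact: (H 1 x xi ltr01 (lexx _) Kx).
Qed.

Lemma symb_split (cs : FF -> V -> R) x xi :
  symb cs x xi = princ cs x xi + \sum_(a | (mdeg a < m)%N) cs a x * monom xi a.
Proof.
rewrite /symb /princ (bigID (fun a => mdeg a == m)) /=; congr (_ + _); apply: eq_bigl => a.
  by apply/idP/idP => [/andP[_ ->] // | /eqP h]; rewrite h leqnn eqxx.
by rewrite ltn_neqAle andbC.
Qed.

Lemma sq_dist_ge0 (ar ai : FF -> V -> R) zr zi x xi : 0 <= sq_dist ar ai zr zi x xi.
Proof. by rewrite /sq_dist addr_ge0 // sqr_ge0. Qed.

Lemma ellip (ar ai : FF -> V -> R) zr zi :
  (forall a, (mdeg a <= m)%N -> smooth_on U (ar a) /\ smooth_on U (ai a)) ->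
  (exists2 C : R, 0 < C & forall x xi, K x ->
       enorm xi ^+ m / C <= Num.sqrt (princ ar x xi ^+ 2 + princ ai x xi ^+ 2)) ->
  exists2 E : R, 0 <= E & forall x xi, K x ->
    japan xi ^+ m <= E * Num.sqrt (1 + sq_dist ar ai zr zi x xi).
Proof.
move=> sm [C0 C00 HC].
have [m0|mpos] := posnP m.
  exists 1 => // x xi Kx.
  have -> : japan xi ^+ m = 1 by rewrite m0 expr0.
  rewrite mul1r -[X in X <= _]sqrtr1 ler_sqrt; last by rewrite addr_ge0 // sq_dist_ge0.
  by rewrite lerDl sq_dist_ge0.
have [Br Br0 HBr] := lower_bound (cs := ar) (fun a h => (sm a h).1).
have [Bi Bi0 HBi] := lower_bound (cs := ai) (fun a h => (sm a h).2).
have Bl0 : 0 <= Br + Bi by rewrite addr_ge0.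
eexists; last first.
  move=> x xi Kx.
  have J0 : 0 <= japan xi ^+ m.-1 by apply: exprn_ge0; exact: ltW (japan_gt0 xi).
  have := @ellip_point R m.-1 (japan xi) (enorm xi) C0 (princ ar x xi) (princ ai x xi)
    (symb ar x xi - zr) (symb ai x xi - zi)
    (\sum_(a | (mdeg a < m)%N) ar a x * monom xi a)
    (\sum_(a | (mdeg a < m)%N) ai a x * monom xi a) zr zi (Br + Bi)
    (sq_dist ar ai zr zi x xi) (japan_ge1 xi).
  rewrite prednK //; apply.
  - by rewrite /japan sqr_sqrtr // addr_ge0 // sqr_ge0.
  - exact: sqrtr_ge0.
  - exact: C00.
  - exact: Bl0.
  - exact: sq_dist_ge0.
  - exact: HC.
  - by rewrite symb_split; ring.
  - by rewrite symb_split; ring.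
  - by rewrite -sqrtr_sqr ler_sqrt ?sq_dist_ge0 // /sq_dist lerDl sqr_ge0.
  - by rewrite -sqrtr_sqr ler_sqrt ?sq_dist_ge0 // /sq_dist lerDr sqr_ge0.
  - apply: le_trans (HBr x xi Kx) _; apply: ler_wpM2r => //; lra.
  - apply: le_trans (HBi x xi Kx) _; apply: ler_wpM2r => //; lra.
have := normr_ge0 zr; have := normr_ge0 zi; move=> h1 h2.
by repeat (apply: addr_ge0 || apply: mulr_ge0 || apply: exprn_ge0); try lra.
Qed.

End Main.

Unset Implicit Arguments.
Theorem proposition4p1 (R : realType) (n m : nat) (U : set 'rV[R]_n)
  (ar ai : {ffun 'I_n -> 'I_m.+1} -> 'rV[R]_n -> R) :
  open U ->
  (forall a, (mdeg a <= m)%N -> smooth_on U (ar a) /\ smooth_on U (ai a)) ->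
  (forall K : set 'rV[R]_n, compact K -> K `<=` U ->
     exists2 C : R, 0 < C & forall x xi, K x ->
       enorm xi ^+ m / C <= Num.sqrt (princ ar x xi ^+ 2 + princ ai x xi ^+ 2)) ->
  forall zr zi : R, exists2 alpha0 : R, 0 < alpha0 &
  forall (l : R) (ta b : 'I_n -> nat) (K : set 'rV[R]_n), compact K -> K `<=` U ->
  exists C : R, forall (alpha : R) (x xi : 'rV[R]_n),
    0 < alpha -> alpha <= alpha0 -> K x ->
    `| dX ta (dXi b (fun y eta => (1 + sq_dist ar ai zr zi y eta / alpha) `^ l)) x xi |
      <= C * (1 + sq_dist ar ai zr zi x xi / alpha) `^ l
           * Lam ar ai zr zi alpha x xi ^- (mlen ta + mlen b)
           * japan xi ^- mlen b.
Proof.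
move=> oU Hsm Hell zr zi; exists 1 => // l ta b K cK KU.
pose s := sq_dist ar ai zr zi.
have s0 : forall x xi, U x -> 0 <= s x xi by move=> x xi _; exact: sq_dist_ge0.
have [Gr Sr] := q_class oU KU cK zr (fun a h => (Hsm a h).1).
have [Gi Si] := q_class oU KU cK zi (fun a h => (Hsm a h).2).
have [E E0 HE] := ellip oU KU cK zr zi Hsm (Hell K cK KU).
pose L := Lam ar ai zr zi.
pose facS := facL (@facP R n) L.
have facS0 : forall o a x xi, 0 <= facS o a x xi.
  by move=> o a x xi; rewrite /facS /facL; apply: mulr_ge0;
    [rewrite invr_ge0; exact: sqrtr_ge0 | exact: facP0].
pose W := fun a x xi => Num.sqrt (a + s x xi).
have hL : forall a x xi, 0 < a -> a <= 1 -> K x -> 0 < L a x xi <= 1.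
  move=> a x xi a0 a1 Kx; have := s0 x xi (KU _ Kx) => h.
  apply/andP; split.
    by rewrite /L /Lam sqrtr_gt0 divr_gt0 //; rewrite -/(s x xi); lra.
  rewrite /L /Lam -[X in _ <= X]sqrtr1 ler_sqrt //; rewrite -/(s x xi).
  by rewrite ler_pdivrMr; lra.
have hW : forall a x xi, 0 < a -> a <= 1 -> K x ->
    japan xi ^+ m <= E * W a x xi * (L a x xi)^-1.
  move=> a x xi a0 a1 Kx; have := s0 x xi (KU _ Kx) => h.
  rewrite -mulrA.
  have -> : W a x xi * (L a x xi)^-1 = Num.sqrt (1 + s x xi).
    rewrite /W /L /Lam -/(s x xi) sqrtrM; last lra.
    rewrite sqrtrV; last lra.
    have : 0 < Num.sqrt (a + s x xi) by rewrite sqrtr_gt0; lra.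
    have : 0 < Num.sqrt (1 + s x xi) by rewrite sqrtr_gt0; lra.
    move=> h1 h2; field; apply/andP; split; exact: lt0r_neq0.
  exact: HE.
have h0 : forall (cs : {ffun 'I_n -> 'I_m.+1} -> 'rV[R]_n -> R) z,
    (forall x xi, `|symb cs x xi - z| <= Num.sqrt (s x xi)) ->
    forall a x xi, 0 < a -> a <= 1 -> K x -> `|symb cs x xi - z| <= W a x xi.
  move=> cs z hq a x xi a0 a1 Kx; apply: le_trans (hq x xi) _.
  by rewrite /W ler_sqrt ?lerDr; have := s0 x xi (KU _ Kx); lra.
have hqr : forall x xi, `|symb ar x xi - zr| <= Num.sqrt (s x xi).
  move=> x xi; rewrite -sqrtr_sqr ler_sqrt; last exact: sq_dist_ge0.
  by rewrite /s /sq_dist lerDl sqr_ge0.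
have hqi : forall x xi, `|symb ai x xi - zi| <= Num.sqrt (s x xi).
  move=> x xi; rewrite -sqrtr_sqr ler_sqrt; last exact: sq_dist_ge0.
  by rewrite /s /sq_dist lerDr sqr_ge0.
have BSr := fun N => transfer (@facP0 R n) (N := N) E0 hL (h0 ar zr hqr) hW (Sr N).
have BSi := fun N => transfer (@facP0 R n) (N := N) E0 hL (h0 ai zi hqi) hW (Si N).
pose qrF := fun (_ : R) x xi => symb ar x xi - zr.
pose qiF := fun (_ : R) x xi => symb ai x xi - zi.
have eS : forall a, Fadd (Fmul qrF qrF) (Fmul qiF qiF) a = s.
  by move=> a; apply/funext => x; apply/funext => xi; rewrite /s /sq_dist !expr2.
have GsF : Good U (Fadd (Fmul qrF qrF) (Fmul qiF qiF)).
  by have h := Good_add oU (Good_mul oU Gr Gr) (Good_mul oU Gi Gi); exact: h.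
have Gs : forall N, GoodN U N s.
  by move=> N; rewrite -(eS 1); exact: GsF N 1 ltr01.
have Bs : forall N, BdN K facS N (fun _ => s) (fun a x xi => a + s x xi).
  move=> N.
  have B1 := BdN_mul oU KU (Gr N) (Gr N) (BSr N) (BSr N).
  have B2 := BdN_mul oU KU (Gi N) (Gi N) (BSi N) (BSi N).
  have B3 := BdN_add oU KU (GF_mul oU (Gr N) (Gr N)) (GF_mul oU (Gi N) (Gi N)) B1 B2.
  have -> : (fun _ : R => s) = Fadd (Fmul qrF qrF) (Fmul qiF qiF).
    by apply/funext => a; rewrite eS.
  apply: (BdN_w facS0 (c := 1)) B3 => // a x xi a0 a1 Kx.
  rewrite /Wmul /W -expr2 sqr_sqrtr ?mul1r //; have := s0 x xi (KU _ Kx); lra.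
set ds := opsX ta (enum 'I_n) ++ opsXi b (enum 'I_n).
have [C C0 HC] := Bd_phi oU KU facS0 s0 Gs Bs (N := size ds) l (leqnn (size ds)).
exists C => alpha x xi a0 a1 Kx.
have := HC alpha x xi a0 a1 Kx.
rewrite dX_aops dXi_aops /aops -foldr_cat -/(aops ds _).
rewrite mu_facL mu_facP /ds size_cat count_cat size_opsX size_opsXi count_opsX count_opsXi.
by rewrite !mlen_enum add0n mulrA.
Qed.
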